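(* In the configuration described in the context, let $R_1=\delta r_1^2$ and $R_2=\delta r_2^2$ where $\delta,r_1,r_2,r_3$ are positive integers with $\gcd(r_1,r_2)=1$, $r_1>r_2$ and $r_1^2+r_2^2=r_3^2$. Then all of the lengths $T_1T_2$, $C_1M$, $C_2M$, $T_1I$, $T_2I$, $C_1M_1$, $C_2M_2$, $M_1M$, $M_2M$, $IM$, $C_2K$, $T_2K$, $C_1K$, $T_1K$ are integers if and only if $r_3(r_1^2-r_2^2)$ divides $\delta$, i.e. $\delta = t\,r_3(r_1^2-r_2^2)$ for a positive integer $t$, so that $R_1 = t r_3 r_1^2(r_1^2-r_2^2)$ and $R_2 = t r_3 r_2^2 (r_1^2-r_2^2)$. In that case $T_1T_2 = 2tr_1r_2r_3(r_1^2-r_2^2)$, $C_1M = tr_1r_3^2(r_1^2-r_2^2)$, $C_2M = tr_2r_3^2(r_1^2-r_2^2)$, $T_1I = 2tr_2r_1^2(r_1^2-r_2^2)$, $T_2I = 2tr_1r_2^2(r_1^2-r_2^2)$, $C_1M_1 = tr_1^3(r_1^2-r_2^2)$, $C_2M_2 = tr_2^3(r_1^2-r_2^2)$, $M_1M = tr_1r_2^2(r_1^2-r_2^2)$, $M_2M = tr_2r_1^2(r_1^2-r_2^2)$, $IM=T_1M=T_2M = tr_1r_2r_3(r_1^2-r_2^2)$, $C_2K = tr_2^2r_3^3$, $T_2K = 2tr_1r_3r_2^3$, $C_1K = tr_1^2r_3^3$, $T_1K = 2tr_2r_3r_1^3$; consequently the right triangles $C_1T_1M_1$, $C_1IM_1$,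 $C_2T_2M_2$, $C_2IM_2$, $T_1M_1M$, $MM_1I$, $IM_2M$, $MM_2T_2$, $C_1T_1M$, $C_1IM$, $C_2T_2M$, $C_2IM$, $C_1MC_2$, $T_1IT_2$, $C_2T_2K$, $C_1T_1K$ all have integer side lengths.
   Context: Configuration: two circles in the plane with centers $C_1,C_2$ and radii $R_1>R_2>0$, externally tangent at the point $I$ (so $I$ lies on segment $C_1C_2$ and $C_1C_2=R_1+R_2$). Let a common external tangent line touch the first circle at $T_1$ and the second circle at $T_2$ (both circles on the same side of line $T_1T_2$). Let $M$ be the midpoint of segment $T_1T_2$; equivalently, $M$ is the point where the common tangent line at $I$ (the line through $I$ perpendicular to $C_1C_2$) meets $T_1T_2$. Let $M_1$ be the midpoint of segment $T_1I$ (which is the intersection point of segment $C_1M$ with $T_1I$, the foot of the perpendicular from $C_1$ to $T_1I$), and $M_2$ the midpoint of segment $T_2I$ (the intersection of $C_2M$ with $T_2I$). Since $R_1>R_2$, the lines $T_1T_2$ and $C_1C_2$ meet at a point $K$, lying beyond $C_2$ on ray $C_1C_2$ and beyond $T_2$ on ray $T_1T_2$. For points $X,Y$, $XY$ denotes the length of segment $\overline{XY}$. *)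

(* Defs.v *)
From Stdlib Require Import Reals ZArith.
Open Scope R_scope.

Definition point : Type := (R * R)%type.

Definition distp (P Q : point) : R :=
  sqrt ((fst P - fst Q) ^ 2 + (snd P - snd Q) ^ 2).

Definition midpoint (P Q : point) : point :=
  ((fst P + fst Q) / 2, (snd P + snd Q) / 2).

Definition dotv (P Q R' S : point) : R :=
  (fst Q - fst P) * (fst S - fst R') + (snd Q - snd P) * (snd S - snd R').

Definition crossv (P Q R' : point) : R :=
  (fst Q - fst P) * (snd R' - snd P) - (snd Q - snd P) * (fst R' - fst P).

Definition on_line (X P Q : point) : Prop :=
  exists s : R, X = (fst P + s * (fst Q - fst P), snd P + s * (snd Q - snd P)).

Definition is_int (x : R) : Prop := exists z : Z, x = IZR z.

Definition config (C1 C2 : point) (R1 R2 : R)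
  (I T1 T2 M M1 M2 K : point) : Prop :=
  0 < R2 /\ R2 < R1 /\
  (* externally tangent circles, tangent at I *)
  distp C1 C2 = R1 + R2 /\ distp C1 I = R1 /\ distp I C2 = R2 /\
  distp C1 T1 = R1 /\ distp C2 T2 = R2 /\
  (* line T1T2 tangent to both circles *)
  dotv T1 T2 C1 T1 = 0 /\ dotv T1 T2 C2 T2 = 0 /\
  (* both circles strictly on the same side of line T1T2 (forces T1 <> T2) *)
  0 < crossv T1 T2 C1 * crossv T1 T2 C2 /\
  M = midpoint T1 T2 /\ M1 = midpoint T1 I /\ M2 = midpoint T2 I /\
  on_line K T1 T2 /\ on_line K C1 C2.

(* Main.v *)
Require Import Defs.
From Stdlib Require Import Reals ZArith Znumtheory Lra Lia Psatz.
Open Scope R_scope.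
Section NTs.
Local Open Scope Z_scope.

Lemma rp_div a b d : rel_prime a b -> (d|a) -> (d|b) -> (d|1).
Proof. intros H. destruct H as [_ _ H]. auto. Qed.
Lemma rp_intro a b : (forall d, (d|a) -> (d|b) -> (d|1)) -> rel_prime a b.
Proof. intro H. constructor; auto using Z.divide_1_l. Qed.

Lemma nt (delta r1 r2 r3 : Z) :
  0 < r1 -> 0 < r2 -> 0 < r3 -> Z.gcd r1 r2 = 1 -> r2 < r1 ->
  r1*r1 + r2*r2 = r3*r3 ->
  (r3 | (2*(r1*r1)*r2)*delta) -> ((r1*r1-r2*r2) | (r2*r2*(r3*r3*r3))*delta) ->
  (r3*(r1^2-r2^2) | delta).
Proof.
  intros H1 H2 H3 Hg H12 Hp Da Db.
  assert (ev : forall k l, r1 = 2*k -> r2 = 2*l -> False).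
  { intros k l -> ->. assert (D : (2 | Z.gcd (2*k) (2*l))) by
      (apply Z.gcd_greatest; [exists k; ring | exists l; ring]).
    rewrite Hg in D. destruct D as [x Hx]. lia. }
  assert (n3 : ~ (2 | r3)).
  { intros [m Hm]. subst r3.
    destruct (Z.Even_or_Odd r1) as [[k Hk]|[k Hk]];
    destruct (Z.Even_or_Odd r2) as [[l Hl]|[l Hl]].
    - eauto.
    - subst; ring_simplify in Hp; lia.
    - subst; ring_simplify in Hp; lia.
    - subst; ring_simplify in Hp; lia. }
  assert (nD : ~ (2 | r1*r1 - r2*r2)).
  { intros [m Hm].
    destruct (Z.Even_or_Odd r1) as [[k Hk]|[k Hk]];
    destruct (Z.Even_or_Odd r2) as [[l Hl]|[l Hl]];
    destruct (Z.Even_or_Odd r3) as [[n Hn]|[n Hn]];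
    try solve [eauto]; subst; ring_simplify in Hp; ring_simplify in Hm; lia. }
  assert (rp12 : rel_prime r1 r2) by (apply Zgcd_1_rel_prime; auto).
  assert (rp21 : rel_prime r2 r1) by (apply rel_prime_sym; auto).
  assert (rp31 : rel_prime r3 r1).
  { apply rp_intro. intros d d3 d1.
    apply (rp_div r1 (r2*r2)); auto using rel_prime_mult.
    replace (r2*r2) with (r3*r3 - r1*r1) by lia.
    apply Z.divide_sub_r; apply Z.divide_mul_l; auto. }
  assert (rp32 : rel_prime r3 r2).
  { apply rp_intro. intros d d3 d2.
    apply (rp_div r2 (r1*r1)); auto using rel_prime_mult.
    replace (r1*r1) with (r3*r3 - r2*r2) by lia.
    apply Z.divide_sub_r; apply Z.divide_mul_l; auto. }
  assert (rp3_2 : rel_prime r3 2) by (apply rel_prime_sym, prime_rel_prime; auto using prime_2).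
  assert (rpD2 : rel_prime (r1*r1-r2*r2) r2).
  { apply rp_intro. intros d dD d2.
    apply (rp_div r2 (r1*r1)); auto using rel_prime_mult.
    replace (r1*r1) with ((r1*r1-r2*r2) + r2*r2) by lia.
    apply Z.divide_add_r; auto. apply Z.divide_mul_l; auto. }
  assert (rpD3 : rel_prime (r1*r1-r2*r2) r3).
  { apply rp_intro. intros d dD d3.
    apply (rp_div r3 (2*(r2*r2))); auto using rel_prime_mult.
    replace (2*(r2*r2)) with (r3*r3 - (r1*r1-r2*r2)) by lia.
    apply Z.divide_sub_r; auto. apply Z.divide_mul_l; auto. }
  apply Gauss in Da; [| auto using rel_prime_mult].
  destruct Da as [k Hk]. subst delta.
  replace (r2 * r2 * (r3 * r3 * r3) * (k * r3)) with ((r2 * r2 * (r3 * r3 * r3 * r3)) * k) in Db by ring.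
  apply Gauss in Db; [| auto 10 using rel_prime_mult].
  destruct Db as [m Hm]. subst k. exists m. ring.
Qed.
End NTs.

Definition fr (x1 y1 dx dy wx wy a b : R) : point :=
  (x1 + a*dx + b*wx, y1 + a*dy + b*wy).

Lemma dist_fr x1 y1 dx dy wx wy a b a' b' :
  dx*wx+dy*wy = 0 ->
  distp (fr x1 y1 dx dy wx wy a b) (fr x1 y1 dx dy wx wy a' b') =
  sqrt ((a-a')^2*(dx^2+dy^2) + (b-b')^2*(wx^2+wy^2)).
Proof.
  intro H. unfold distp, fr; cbn [fst snd]. f_equal.
  replace ((a-a')^2*(dx^2+dy^2) + (b-b')^2*(wx^2+wy^2)) with
   ((a-a')^2*(dx^2+dy^2) + (b-b')^2*(wx^2+wy^2) + 2*(a-a')*(b-b')*(dx*wx+dy*wy))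
   by (rewrite H; ring).
  ring.
Qed.

Lemma dist_sq P Q r : distp P Q = r -> (fst P - fst Q)^2 + (snd P - snd Q)^2 = r^2.
Proof. unfold distp. intro H. rewrite <- H. symmetry; apply pow2_sqrt; apply Rplus_le_le_0_compat; apply pow2_ge_0. Qed.

Lemma distp_sym P Q : distp P Q = distp Q P.
Proof. unfold distp. f_equal. ring. Qed.

Lemma sqeq x y : 0 < x -> 0 < y -> x^2 = y^2 -> x = y.
Proof. intros Hx Hy H.
  assert ((x-y)*(x+y) = 0) by (rewrite Rmult_comm; nra).
  apply Rmult_integral in H0. lra. Qed.

Lemma sq0 a b : a^2 + b^2 = 0 -> a = 0 /\ b = 0.
Proof. intro H. split; nra. Qed.

Lemma collin Px Py Qx Qy a b :
  Px^2+Py^2 = a^2 -> Qx^2+Qy^2 = b^2 -> (Px+Qx)^2+(Py+Qy)^2 = (a+b)^2 ->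
  b*Px = a*Qx /\ b*Py = a*Qy.
Proof.
  intros H1 H2 H3.
  assert (PQ : Px*Qx+Py*Qy = a*b) by nra.
  assert (E : (b*Px - a*Qx)^2 + (b*Py - a*Qy)^2 = 0).
  { replace ((b*Px - a*Qx)^2 + (b*Py - a*Qy)^2) with
      (b^2*(Px^2+Py^2) - 2*a*b*(Px*Qx+Py*Qy) + a^2*(Qx^2+Qy^2)) by ring.
    rewrite H1, H2, PQ. ring. }
  apply sq0 in E. lra.
Qed.

Lemma frame C1 C2 R1 R2 I T1 T2 M M1 M2 K :
  config C1 C2 R1 R2 I T1 T2 M M1 M2 K ->
  exists x1 y1 dx dy wx wy,
   dx*wx+dy*wy = 0 /\ dx^2+dy^2 = 4*R1*R2 /\ wx^2+wy^2 = R1^2 /\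
   T1 = fr x1 y1 dx dy wx wy 0 0 /\ T2 = fr x1 y1 dx dy wx wy 1 0 /\
   C1 = fr x1 y1 dx dy wx wy 0 1 /\
   C2 = fr x1 y1 dx dy wx wy 1 (R2/R1) /\
   I = fr x1 y1 dx dy wx wy (R1/(R1+R2)) (2*R2/(R1+R2)) /\
   M = fr x1 y1 dx dy wx wy (1/2) 0 /\
   M1 = fr x1 y1 dx dy wx wy (R1/(2*(R1+R2))) (R2/(R1+R2)) /\
   M2 = fr x1 y1 dx dy wx wy ((2*R1+R2)/(2*(R1+R2))) (R2/(R1+R2)) /\
   K = fr x1 y1 dx dy wx wy (R1/(R1-R2)) 0.
Proof.
  intros (HR2 & HR12 & h1 & h2 & h3 & h4 & h5 & h6 & h7 & h8 & hM & hM1 & hM2 & [s hs] & [sg hsg]).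
  apply dist_sq in h1, h2, h3, h4, h5.
  destruct T1 as [x1 y1], T2 as [x2 y2], C1 as [p q], C2 as [u v], I as [ix iy].
  subst M M1 M2 K.
  unfold dotv, crossv in *; cbn [fst snd] in *.
  injection hsg as Ex Ey.
  assert (E: exists dx, x2 = x1 + dx) by (exists (x2 - x1); ring). destruct E as [dx ->].
  assert (E: exists dy, y2 = y1 + dy) by (exists (y2 - y1); ring). destruct E as [dy ->].
  assert (E: exists wx, p = x1 + wx) by (exists (p - x1); ring). destruct E as [wx ->].
  assert (E: exists wy, q = y1 + wy) by (exists (q - y1); ring). destruct E as [wy ->].
  assert (E: exists vx, u = x1 + dx + vx) by (exists (u - x1 - dx); ring). destruct E as [vx ->].
  assert (E: exists vy, v = y1 + dy + vy) by (exists (v - y1 - dy); ring). destruct E as [vy ->].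
  assert (Hw : wx^2+wy^2 = R1^2) by (rewrite <- h4; ring).
  assert (Hv : vx^2+vy^2 = R2^2) by (rewrite <- h5; ring).
  assert (Hdw : dx*wx+dy*wy = 0) by lra.
  assert (Hdv : dx*vx+dy*vy = 0) by lra.
  assert (Hx : (dx*wy - dy*wx)*(dx*vy-dy*vx) > 0) by lra.
  assert (HD : dx^2+dy^2 > 0).
  { destruct (Req_dec (dx^2+dy^2) 0) as [e|e].
    - apply sq0 in e. destruct e as [e1 e2]. subst dx dy. lra.
    - nra. }
  assert (X1 : (dx*wy - dy*wx)^2 = (dx^2+dy^2)*R1^2).
  { replace ((dx*wy - dy*wx)^2) with ((dx^2+dy^2)*(wx^2+wy^2) - (dx*wx+dy*wy)^2) by ring.
    rewrite Hdw, Hw. ring. }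
  assert (X2 : (dx*vy - dy*vx)^2 = (dx^2+dy^2)*R2^2).
  { replace ((dx*vy - dy*vx)^2) with ((dx^2+dy^2)*(vx^2+vy^2) - (dx*vx+dy*vy)^2) by ring.
    rewrite Hdv, Hv. ring. }
  assert (X12 : (dx*wy - dy*wx)*(dx*vy-dy*vx) = (dx^2+dy^2)*(wx*vx+wy*vy)).
  { replace ((dx*wy - dy*wx)*(dx*vy-dy*vx)) with
      ((dx^2+dy^2)*(wx*vx+wy*vy) - (dx*vx+dy*vy)*(dx*wx+dy*wy)) by ring.
    rewrite Hdv. ring. }
  assert (X5 : (dx*wy - dy*wx)*(dx*vy-dy*vx) = (dx^2+dy^2)*(R1*R2)).
  { assert (Y : 0 < (dx^2+dy^2)*(R1*R2)) by (apply Rmult_lt_0_compat; nra).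
    apply sqeq; try lra.
    { replace (((dx*wy - dy*wx)*(dx*vy-dy*vx))^2) with
        ((dx*wy - dy*wx)^2*(dx*vy-dy*vx)^2) by ring.
      rewrite X1, X2. ring. } }
  assert (WV : wx*vx+wy*vy = R1*R2).
  { rewrite X12 in X5. apply Rmult_eq_reg_l in X5; lra. }
  assert (E : (R1*vx - R2*wx)^2 + (R1*vy - R2*wy)^2 = 0).
  { replace ((R1*vx - R2*wx)^2 + (R1*vy - R2*wy)^2) with
      (R1^2*(vx^2+vy^2) - 2*R1*R2*(wx*vx+wy*vy) + R2^2*(wx^2+wy^2)) by ring.
    rewrite Hv, WV, Hw. ring. }
  apply sq0 in E. destruct E as [E1 E2].
  assert (Evx : vx = R2/R1*wx).
  { apply (Rmult_eq_reg_l R1); [|lra]. replace (R1*(R2/R1*wx)) with (R2*wx) by (field; lra). lra. }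
  assert (Evy : vy = R2/R1*wy).
  { apply (Rmult_eq_reg_l R1); [|lra]. replace (R1*(R2/R1*wy)) with (R2*wy) by (field; lra). lra. }
  subst vx vy. clear E1 E2 Hv Hdv X1 X2 X12 X5 WV Hx h5 h7 h8 h4.
  assert (h1' : (dx + R2/R1*wx - wx)^2 + (dy + R2/R1*wy - wy)^2 = (R1+R2)^2)
    by (rewrite <- h1; ring).
  assert (Hd : dx^2+dy^2 = 4*R1*R2).
  { replace (dx^2+dy^2) with
      ((dx + R2/R1*wx - wx)^2 + (dy + R2/R1*wy - wy)^2
       - 2*(R2/R1 - 1)*(dx*wx+dy*wy) - (R2/R1-1)^2*(wx^2+wy^2)) by (field; lra).
    rewrite h1', Hdw, Hw. field. lra. }
  destruct (collin (ix - (x1+wx)) (iy - (y1+wy)) (x1 + dx + R2/R1*wx - ix)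
              (y1 + dy + R2/R1*wy - iy) R1 R2) as [I1 I2].
  { rewrite <- h2; ring. }
  { rewrite <- h3; ring. }
  { rewrite <- h1; ring. }
  assert (Eix : ix = x1 + R1/(R1+R2)*dx + 2*R2/(R1+R2)*wx).
  { apply (Rmult_eq_reg_l (R1+R2)); [| lra].
    replace ((R1+R2)*ix) with (R2*(x1+wx) + R1*(x1+dx+R2/R1*wx)) by lra.
    field. lra. }
  assert (Eiy : iy = y1 + R1/(R1+R2)*dy + 2*R2/(R1+R2)*wy).
  { apply (Rmult_eq_reg_l (R1+R2)); [| lra].
    replace ((R1+R2)*iy) with (R2*(y1+wy) + R1*(y1+dy+R2/R1*wy)) by lra.
    field. lra. }
  subst ix iy. clear I1 I2 h1 h2 h3 h1'.
  set (A := s - sg). set (B := 1 + sg*(R2/R1 - 1)).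
  assert (ex : A*dx = B*wx) by (unfold A, B; lra).
  assert (ey : A*dy = B*wy) by (unfold A, B; lra).
  assert (HA : A = 0).
  { assert (A*(dx^2+dy^2) = B*(dx*wx+dy*wy)).
    { replace (A*(dx^2+dy^2)) with (dx*(A*dx)+dy*(A*dy)) by ring. rewrite ex, ey. ring. }
    rewrite Hdw, Rmult_0_r in H. apply Rmult_integral in H. destruct H; [auto|lra]. }
  assert (HB : B = 0).
  { assert (B*(wx^2+wy^2) = A*(dx*wx+dy*wy)).
    { replace (B*(wx^2+wy^2)) with (wx*(B*wx)+wy*(B*wy)) by ring. rewrite <- ex, <- ey. ring. }
    rewrite Hdw, Hw, Rmult_0_r in H. apply Rmult_integral in H. destruct H; [auto|nra]. }
  assert (Hs : s = R1/(R1-R2)).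
  { unfold A, B in *. apply (Rmult_eq_reg_l (R1-R2)); [| lra].
    assert (s = sg) by lra. subst s.
    assert (E : R1 * (1 + sg*(R2/R1-1)) = R1 + sg*R2 - sg*R1) by (field; lra).
    rewrite HB, Rmult_0_r in E.
    replace ((R1-R2)*(R1/(R1-R2))) with R1 by (field; lra). lra. }
  exists x1, y1, dx, dy, wx, wy.
  unfold fr, midpoint; cbn [fst snd].
  repeat split; try assumption; try (f_equal; field; lra).
  all: rewrite Hs; f_equal; field; lra.
Qed.

Lemma dists C1 C2 R1 R2 I T1 T2 M M1 M2 K :
  config C1 C2 R1 R2 I T1 T2 M M1 M2 K ->
  distp T1 T2 = sqrt (4*R1*R2) /\
  distp C1 M = sqrt (R1*(R1+R2)) /\
  distp C2 M = sqrt (R2*(R1+R2)) /\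
  distp T1 I = sqrt (4*R1^2*R2/(R1+R2)) /\
  distp T2 I = sqrt (4*R1*R2^2/(R1+R2)) /\
  distp C1 M1 = sqrt (R1^3/(R1+R2)) /\
  distp C2 M2 = sqrt (R2^3/(R1+R2)) /\
  distp M1 M = sqrt (R1*R2^2/(R1+R2)) /\
  distp M2 M = sqrt (R1^2*R2/(R1+R2)) /\
  distp I M = sqrt (R1*R2) /\
  distp T1 M = sqrt (R1*R2) /\
  distp T2 M = sqrt (R1*R2) /\
  distp C2 K = sqrt (R2^2*(R1+R2)^2/(R1-R2)^2) /\
  distp T2 K = sqrt (4*R1*R2^3/(R1-R2)^2) /\
  distp C1 K = sqrt (R1^2*(R1+R2)^2/(R1-R2)^2) /\
  distp T1 K = sqrt (4*R1^3*R2/(R1-R2)^2) /\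
  distp T1 M1 = sqrt (R1^2*R2/(R1+R2)) /\
  distp I M1 = sqrt (R1^2*R2/(R1+R2)) /\
  distp T2 M2 = sqrt (R1*R2^2/(R1+R2)) /\
  distp I M2 = sqrt (R1*R2^2/(R1+R2)).
Proof.
  intro H. assert (H0 := H). destruct H0 as (HR2 & HR12 & _).
  destruct (frame _ _ _ _ _ _ _ _ _ _ _ H) as
    (x1 & y1 & dx & dy & wx & wy & Hdw & Hd & Hw & -> & -> & -> & -> & -> & -> & -> & -> & ->).
  repeat rewrite dist_fr by exact Hdw. rewrite Hd, Hw.
  repeat split; f_equal; field; lra.
Qed.

Lemma pz2 (z:Z) : IZR (z^2) = IZR z ^ 2. Proof. symmetry. exact (pow_IZR z 2). Qed.
Lemma pz3 (z:Z) : IZR (z^3) = IZR z ^ 3. Proof. symmetry. exact (pow_IZR z 3). Qed.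
Lemma sqrt_eqV E V : 0 <= V -> E = V^2 -> sqrt E = V.
Proof. intros H ->. apply sqrt_pow2; auto. Qed.
Ltac dv H Ht' := rewrite H; rewrite ?mult_IZR, ?minus_IZR, ?pz2, ?pz3; apply sqrt_eqV;
   [ repeat first [apply Rmult_le_pos | apply pow_le]; lra
   | rewrite Ht'; field; repeat split; lra].
Ltac isi := solve [assumption | rewrite distp_sym; assumption | eexists; eassumption | eexists; rewrite distp_sym; eassumption].


Theorem mainTheorem4 :
  forall (delta r1 r2 r3 : Z) (C1 C2 I T1 T2 M M1 M2 K : point),
    (0 < delta)%Z -> (0 < r1)%Z -> (0 < r2)%Z -> (0 < r3)%Z ->
    Z.gcd r1 r2 = 1%Z -> (r2 < r1)%Z ->
    (r1 ^ 2 + r2 ^ 2 = r3 ^ 2)%Z ->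
    config C1 C2 (IZR (delta * r1 ^ 2)) (IZR (delta * r2 ^ 2)) I T1 T2 M M1 M2 K ->
    ((is_int (distp T1 T2) /\ is_int (distp C1 M) /\ is_int (distp C2 M) /\
      is_int (distp T1 I) /\ is_int (distp T2 I) /\ is_int (distp C1 M1) /\
      is_int (distp C2 M2) /\ is_int (distp M1 M) /\ is_int (distp M2 M) /\
      is_int (distp I M) /\ is_int (distp C2 K) /\ is_int (distp T2 K) /\
      is_int (distp C1 K) /\ is_int (distp T1 K))
     <-> (r3 * (r1 ^ 2 - r2 ^ 2) | delta)%Z)
    /\
    (forall t : Z, delta = (t * r3 * (r1 ^ 2 - r2 ^ 2))%Z ->
      (0 < t)%Z /\
      IZR (delta * r1 ^ 2) = IZR (t * r3 * r1 ^ 2 * (r1 ^ 2 - r2 ^ 2)) /\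
      IZR (delta * r2 ^ 2) = IZR (t * r3 * r2 ^ 2 * (r1 ^ 2 - r2 ^ 2)) /\
      distp T1 T2 = IZR (2 * t * r1 * r2 * r3 * (r1 ^ 2 - r2 ^ 2)) /\
      distp C1 M = IZR (t * r1 * r3 ^ 2 * (r1 ^ 2 - r2 ^ 2)) /\
      distp C2 M = IZR (t * r2 * r3 ^ 2 * (r1 ^ 2 - r2 ^ 2)) /\
      distp T1 I = IZR (2 * t * r2 * r1 ^ 2 * (r1 ^ 2 - r2 ^ 2)) /\
      distp T2 I = IZR (2 * t * r1 * r2 ^ 2 * (r1 ^ 2 - r2 ^ 2)) /\
      distp C1 M1 = IZR (t * r1 ^ 3 * (r1 ^ 2 - r2 ^ 2)) /\
      distp C2 M2 = IZR (t * r2 ^ 3 * (r1 ^ 2 - r2 ^ 2)) /\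
      distp M1 M = IZR (t * r1 * r2 ^ 2 * (r1 ^ 2 - r2 ^ 2)) /\
      distp M2 M = IZR (t * r2 * r1 ^ 2 * (r1 ^ 2 - r2 ^ 2)) /\
      distp I M = IZR (t * r1 * r2 * r3 * (r1 ^ 2 - r2 ^ 2)) /\
      distp T1 M = IZR (t * r1 * r2 * r3 * (r1 ^ 2 - r2 ^ 2)) /\
      distp T2 M = IZR (t * r1 * r2 * r3 * (r1 ^ 2 - r2 ^ 2)) /\
      distp C2 K = IZR (t * r2 ^ 2 * r3 ^ 3) /\
      distp T2 K = IZR (2 * t * r1 * r3 * r2 ^ 3) /\
      distp C1 K = IZR (t * r1 ^ 2 * r3 ^ 3) /\
      distp T1 K = IZR (2 * t * r2 * r3 * r1 ^ 3) /\
      (* the sixteen right triangles have integer side lengths *)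
      (is_int (distp C1 T1) /\ is_int (distp T1 M1) /\ is_int (distp M1 C1)) /\
      (is_int (distp C1 I) /\ is_int (distp I M1) /\ is_int (distp M1 C1)) /\
      (is_int (distp C2 T2) /\ is_int (distp T2 M2) /\ is_int (distp M2 C2)) /\
      (is_int (distp C2 I) /\ is_int (distp I M2) /\ is_int (distp M2 C2)) /\
      (is_int (distp T1 M1) /\ is_int (distp M1 M) /\ is_int (distp M T1)) /\
      (is_int (distp M M1) /\ is_int (distp M1 I) /\ is_int (distp I M)) /\
      (is_int (distp I M2) /\ is_int (distp M2 M) /\ is_int (distp M I)) /\
      (is_int (distp M M2) /\ is_int (distp M2 T2) /\ is_int (distp T2 M)) /\
      (is_int (distp C1 T1) /\ is_int (distp T1 M) /\ is_int (distp M C1)) /\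
      (is_int (distp C1 I) /\ is_int (distp I M) /\ is_int (distp M C1)) /\
      (is_int (distp C2 T2) /\ is_int (distp T2 M) /\ is_int (distp M C2)) /\
      (is_int (distp C2 I) /\ is_int (distp I M) /\ is_int (distp M C2)) /\
      (is_int (distp C1 M) /\ is_int (distp M C2) /\ is_int (distp C2 C1)) /\
      (is_int (distp T1 I) /\ is_int (distp I T2) /\ is_int (distp T2 T1)) /\
      (is_int (distp C2 T2) /\ is_int (distp T2 K) /\ is_int (distp K C2)) /\
      (is_int (distp C1 T1) /\ is_int (distp T1 K) /\ is_int (distp K C1))).
Proof.
  intros delta r1 r2 r3 C1 C2 I T1 T2 M M1 M2 K Hd H1 H2 H3 Hg H12 Hpy Hc.
  assert (Hc0 := Hc). destruct Hc0 as (_ & _ & e1 & e2 & e3 & e4 & e5 & _).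
  destruct (dists _ _ _ _ _ _ _ _ _ _ _ Hc) as (d1 & d2 & d3 & d4 & d5 & d6 & d7 & d8 & d9 & d10 & d11 & d12 & d13 & d14 & d15 & d16 & d17 & d18 & d19 & d20).
  assert (ER1 : IZR (delta*r1^2) = IZR delta * IZR r1 ^2) by (rewrite mult_IZR, pz2; ring).
  assert (ER2 : IZR (delta*r2^2) = IZR delta * IZR r2 ^2) by (rewrite mult_IZR, pz2; ring).
  assert (Hpy' : IZR r3 ^ 2 = IZR r1 ^2 + IZR r2^2)
    by (rewrite <- !pz2, <- plus_IZR, Hpy; reflexivity).
  assert (ES : IZR delta * IZR r1^2 + IZR delta * IZR r2^2 = IZR delta * IZR r3^2)
    by (rewrite Hpy'; ring).
  assert (ED : IZR delta * IZR r1^2 - IZR delta * IZR r2^2 = IZR delta * (IZR r1^2 - IZR r2^2))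
    by ring.
  assert (i4 : is_int (distp C1 T1)) by (eexists; exact e4).
  assert (i2 : is_int (distp C1 I)) by (eexists; exact e2).
  assert (i3 : is_int (distp I C2)) by (eexists; exact e3).
  assert (i5 : is_int (distp C2 T2)) by (eexists; exact e5).
  assert (i1 : is_int (distp C1 C2)) by (exists (delta*r1^2 + delta*r2^2)%Z; rewrite plus_IZR; exact e1).
  clear e1 e2 e3 e4 e5.
  rewrite ER1, ER2 in *. rewrite ES, ED in *.
  assert (a0 : 0 < IZR r1) by (apply IZR_lt; auto).
  assert (b0 : 0 < IZR r2) by (apply IZR_lt; auto).
  assert (c0 : 0 < IZR r3) by (apply IZR_lt; auto).
  assert (dl0 : 0 < IZR delta) by (apply IZR_lt; auto).
  assert (ab : IZR r2 < IZR r1) by (apply IZR_lt; auto).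
  assert (hab : 0 < IZR r1 ^ 2 - IZR r2 ^ 2) by nra.
  assert (P2 : (forall t : Z, delta = (t * r3 * (r1 ^ 2 - r2 ^ 2))%Z ->
      (0 < t)%Z /\
      IZR (delta * r1 ^ 2) = IZR (t * r3 * r1 ^ 2 * (r1 ^ 2 - r2 ^ 2)) /\
      IZR (delta * r2 ^ 2) = IZR (t * r3 * r2 ^ 2 * (r1 ^ 2 - r2 ^ 2)) /\
      distp T1 T2 = IZR (2 * t * r1 * r2 * r3 * (r1 ^ 2 - r2 ^ 2)) /\
      distp C1 M = IZR (t * r1 * r3 ^ 2 * (r1 ^ 2 - r2 ^ 2)) /\
      distp C2 M = IZR (t * r2 * r3 ^ 2 * (r1 ^ 2 - r2 ^ 2)) /\
      distp T1 I = IZR (2 * t * r2 * r1 ^ 2 * (r1 ^ 2 - r2 ^ 2)) /\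
      distp T2 I = IZR (2 * t * r1 * r2 ^ 2 * (r1 ^ 2 - r2 ^ 2)) /\
      distp C1 M1 = IZR (t * r1 ^ 3 * (r1 ^ 2 - r2 ^ 2)) /\
      distp C2 M2 = IZR (t * r2 ^ 3 * (r1 ^ 2 - r2 ^ 2)) /\
      distp M1 M = IZR (t * r1 * r2 ^ 2 * (r1 ^ 2 - r2 ^ 2)) /\
      distp M2 M = IZR (t * r2 * r1 ^ 2 * (r1 ^ 2 - r2 ^ 2)) /\
      distp I M = IZR (t * r1 * r2 * r3 * (r1 ^ 2 - r2 ^ 2)) /\
      distp T1 M = IZR (t * r1 * r2 * r3 * (r1 ^ 2 - r2 ^ 2)) /\
      distp T2 M = IZR (t * r1 * r2 * r3 * (r1 ^ 2 - r2 ^ 2)) /\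
      distp C2 K = IZR (t * r2 ^ 2 * r3 ^ 3) /\
      distp T2 K = IZR (2 * t * r1 * r3 * r2 ^ 3) /\
      distp C1 K = IZR (t * r1 ^ 2 * r3 ^ 3) /\
      distp T1 K = IZR (2 * t * r2 * r3 * r1 ^ 3) /\
      (is_int (distp C1 T1) /\ is_int (distp T1 M1) /\ is_int (distp M1 C1)) /\
      (is_int (distp C1 I) /\ is_int (distp I M1) /\ is_int (distp M1 C1)) /\
      (is_int (distp C2 T2) /\ is_int (distp T2 M2) /\ is_int (distp M2 C2)) /\
      (is_int (distp C2 I) /\ is_int (distp I M2) /\ is_int (distp M2 C2)) /\
      (is_int (distp T1 M1) /\ is_int (distp M1 M) /\ is_int (distp M T1)) /\
      (is_int (distp M M1) /\ is_int (distp M1 I) /\ is_int (distp I M)) /\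
      (is_int (distp I M2) /\ is_int (distp M2 M) /\ is_int (distp M I)) /\
      (is_int (distp M M2) /\ is_int (distp M2 T2) /\ is_int (distp T2 M)) /\
      (is_int (distp C1 T1) /\ is_int (distp T1 M) /\ is_int (distp M C1)) /\
      (is_int (distp C1 I) /\ is_int (distp I M) /\ is_int (distp M C1)) /\
      (is_int (distp C2 T2) /\ is_int (distp T2 M) /\ is_int (distp M C2)) /\
      (is_int (distp C2 I) /\ is_int (distp I M) /\ is_int (distp M C2)) /\
      (is_int (distp C1 M) /\ is_int (distp M C2) /\ is_int (distp C2 C1)) /\
      (is_int (distp T1 I) /\ is_int (distp I T2) /\ is_int (distp T2 T1)) /\
      (is_int (distp C2 T2) /\ is_int (distp T2 K) /\ is_int (distp K C2)) /\
      (is_int (distp C1 T1) /\ is_int (distp T1 K) /\ is_int (distp K C1)))).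
  { intros t Ht.
    assert (Dp : (0 < r3*(r1^2-r2^2))%Z) by (apply Z.mul_pos_pos; nia).
    assert (tp : (0 < t)%Z) by nia.
    assert (Ht' : IZR delta = IZR t * IZR r3 * (IZR r1^2 - IZR r2^2))
      by (rewrite Ht, !mult_IZR, minus_IZR, !pz2; ring).
    assert (t0 : 0 < IZR t) by (apply IZR_lt; auto).
    assert (v1 : distp T1 T2 = IZR (2 * t * r1 * r2 * r3 * (r1 ^ 2 - r2 ^ 2)%Z)) by (dv d1 Ht').
    assert (v2 : distp C1 M = IZR (t * r1 * r3 ^ 2 * (r1 ^ 2 - r2 ^ 2)%Z)) by (dv d2 Ht').
    assert (v3 : distp C2 M = IZR (t * r2 * r3 ^ 2 * (r1 ^ 2 - r2 ^ 2)%Z)) by (dv d3 Ht').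
    assert (v4 : distp T1 I = IZR (2 * t * r2 * r1 ^ 2 * (r1 ^ 2 - r2 ^ 2)%Z)) by (dv d4 Ht').
    assert (v5 : distp T2 I = IZR (2 * t * r1 * r2 ^ 2 * (r1 ^ 2 - r2 ^ 2)%Z)) by (dv d5 Ht').
    assert (v6 : distp C1 M1 = IZR (t * r1 ^ 3 * (r1 ^ 2 - r2 ^ 2)%Z)) by (dv d6 Ht').
    assert (v7 : distp C2 M2 = IZR (t * r2 ^ 3 * (r1 ^ 2 - r2 ^ 2)%Z)) by (dv d7 Ht').
    assert (v8 : distp M1 M = IZR (t * r1 * r2 ^ 2 * (r1 ^ 2 - r2 ^ 2)%Z)) by (dv d8 Ht').
    assert (v9 : distp M2 M = IZR (t * r2 * r1 ^ 2 * (r1 ^ 2 - r2 ^ 2)%Z)) by (dv d9 Ht').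
    assert (v10 : distp I M = IZR (t * r1 * r2 * r3 * (r1 ^ 2 - r2 ^ 2)%Z)) by (dv d10 Ht').
    assert (v11 : distp T1 M = IZR (t * r1 * r2 * r3 * (r1 ^ 2 - r2 ^ 2)%Z)) by (dv d11 Ht').
    assert (v12 : distp T2 M = IZR (t * r1 * r2 * r3 * (r1 ^ 2 - r2 ^ 2)%Z)) by (dv d12 Ht').
    assert (v13 : distp C2 K = IZR (t * r2 ^ 2 * r3 ^ 3%Z)) by (dv d13 Ht').
    assert (v14 : distp T2 K = IZR (2 * t * r1 * r3 * r2 ^ 3%Z)) by (dv d14 Ht').
    assert (v15 : distp C1 K = IZR (t * r1 ^ 2 * r3 ^ 3%Z)) by (dv d15 Ht').
    assert (v16 : distp T1 K = IZR (2 * t * r2 * r3 * r1 ^ 3%Z)) by (dv d16 Ht').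
    assert (v17 : distp T1 M1 = IZR (t * r2 * r1 ^ 2 * (r1 ^ 2 - r2 ^ 2)%Z)) by (dv d17 Ht').
    assert (v18 : distp I M1 = IZR (t * r2 * r1 ^ 2 * (r1 ^ 2 - r2 ^ 2)%Z)) by (dv d18 Ht').
    assert (v19 : distp T2 M2 = IZR (t * r1 * r2 ^ 2 * (r1 ^ 2 - r2 ^ 2)%Z)) by (dv d19 Ht').
    assert (v20 : distp I M2 = IZR (t * r1 * r2 ^ 2 * (r1 ^ 2 - r2 ^ 2)%Z)) by (dv d20 Ht').
    repeat split; try assumption;
    try (f_equal; rewrite Ht; ring);
    isi.
  }
  split; [split | rewrite <- ER1, <- ER2; exact P2].
  - intros (j1 & j2 & j3 & j4 & j5 & j6 & j7 & j8 & j9 & j10 & j11 & j12 & j13 & j14).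
    destruct j4 as [z Hz]. destruct j11 as [z' Hz'].
    assert (Q4 : distp T1 I = 2*IZR delta*IZR r1^2*IZR r2*/IZR r3).
    { rewrite d4. apply sqrt_eqV.
      - repeat first [apply Rmult_le_pos | apply pow_le]; try lra.
        apply Rlt_le, Rinv_0_lt_compat; lra.
      - field. lra. }
    assert (Q13 : distp C2 K = IZR delta*IZR r2^2*IZR r3^2*/(IZR r1^2 - IZR r2^2)).
    { rewrite d13. apply sqrt_eqV.
      - repeat first [apply Rmult_le_pos | apply pow_le]; try lra.
        apply Rlt_le, Rinv_0_lt_compat; lra.
      - field. lra. }
    rewrite Q4 in Hz. rewrite Q13 in Hz'.
    apply (nt delta r1 r2 r3); auto.
    + rewrite !Z.pow_2_r in Hpy. exact Hpy.
    + exists z. apply eq_IZR. rewrite !mult_IZR, <- Hz. field. lra.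
    + exists (z'*r3)%Z. apply eq_IZR. rewrite !mult_IZR, minus_IZR, !mult_IZR, <- Hz'. field. lra.
  - intros [k Hk].
    pose proof (P2 k ltac:(rewrite Hk; ring)) as Q. decompose [and] Q.
    repeat split; eexists; eassumption.
Qed.
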